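(* Fix $\alpha\in(0,1)$ and an integer $d\ge1$, and define \[ \gamma^L_0(t_1,t_2,\alpha)=\frac{(t_1-d)\,t_2}{\left(\frac{\alpha^2}{t_2+1}\right)^{\frac{1}{t_1-d+1}}(t_2+1)-1}-(t_1-d). \] Suppose $t_1,t_2\to\infty$ and there exist constants $0<r<R<\infty$ with $r\le t_1/t_2\le R$. Then $\gamma^L_0(t_1,t_2,\alpha)=2\log(1/\alpha)+\log(t_2+1)+o(1)$. *)

(* Defs.v *)
From Stdlib Require Import Reals.
Open Scope R_scope.

Definition gammaL0 (d : nat) (t1 t2 alpha : R) : R :=
  (t1 - INR d) * t2 /
    (Rpower (alpha ^ 2 / (t2 + 1)) (1 / (t1 - INR d + 1)) * (t2 + 1) - 1)
  - (t1 - INR d).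

(* Main.v *)
Require Import Defs.
From Stdlib Require Import Reals.
From Stdlib Require Import Lra Psatz.
Open Scope R_scope.

Lemma core (m N L x u eta kappa eps : R) :
  0 < eps -> 0 < kappa -> 0 < eta -> 4 <= m -> kappa * m <= N -> 1 <= N ->
  x * N = L -> 0 < x -> x <= 1/2 -> 1 - x <= u -> u <= 1 - x + x * x ->
  L <= eta * m -> L * L <= eta * m -> eta * (8 + 28 / kappa) <= eps ->
  Rabs ((N - 1) * (m - 1) / (u * m - 1) - (N - 1) - L) < eps.
Proof.
  intros Heps Hk Heta Hm HN HN1 HxN Hx0 Hx12 Hu1 Hu2 HL HL2 Heps2.
  set (D := u * m - 1).
  assert (HD : m / 4 <= D) by (unfold D; nra).
  set (d := u - 1 + x).
  assert (Hd0 : 0 <= d) by (unfold d; lra).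
  assert (Hd1 : d <= x * x) by (unfold d; lra).
  set (Num := x * (N - m) + m * x * x * N - m * d * (N - 1 + x * N)).
  assert (E : (N - 1) * (m - 1) / D - (N - 1) - L = Num / D).
  { unfold Num, d, D. rewrite <- HxN. field. unfold D in HD. lra. }
  rewrite E.
  set (w := / kappa).
  assert (Hw : kappa * w = 1) by (unfold w; field; lra).
  assert (Hw0 : 0 < w) by (unfold w; apply Rinv_0_lt_compat; lra).
  assert (Hxm : x * m <= L * w).
  { assert (x * m * kappa <= L) by nra.
    replace (x * m) with (x * m * kappa * w) by (rewrite Rmult_assoc, Hw; ring).
    nra. }
  assert (HL0 : 0 <= L) by nra.
  assert (Hmx2 : m * x * x * N <= L * L * w).
  { replace (m * x * x * N) with ((x * m) * (x * N)) by ring. rewrite HxN. nra. }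
  assert (HnumA : Rabs Num <= L + L * w + (5/2) * (L * L * w)).
  { assert (0 <= m * d * (N - 1 + x * N)).
    { apply Rmult_le_pos; [nra| nra]. }
    assert (m * d * (N - 1 + x * N) <= (3/2) * (m * x * x * N)).
    { assert (N - 1 + x * N <= (3/2) * N) by nra.
      assert (0 <= m * d) by nra.
      assert (m * d * (N - 1 + x * N) <= m * d * ((3/2) * N)) by nra.
      assert (m * d * N <= m * (x * x) * N) by (apply Rmult_le_compat_r; nra).
      nra. }
    assert (0 <= m * x * x * N) by (apply Rmult_le_pos; nra).
    assert (- (L + L*w) <= x * (N - m) <= L + L * w) by nra.
    unfold Num. apply Rabs_le.
    lra. }
  assert (HD0 : 0 < D) by lra.
  unfold Rdiv. rewrite Rabs_mult, Rabs_inv, (Rabs_pos_eq D) by lra.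
  apply (Rmult_lt_reg_r D); [lra|].
  rewrite Rmult_assoc, Rinv_l by lra. rewrite Rmult_1_r.
  assert (L + L * w + (5/2) * (L * L * w) <= eta * m * (1 + (7/2) * w)) by nra.
  assert (eta * (8 + 28 * w) <= eps) by exact Heps2.
  assert (eta * m * (1 + 7/2 * w) < eps * (m/4)) by nra.
  nra.
Qed.

Theorem proposition2 (alpha : R) (d : nat) (r Rb : R) :
  0 < alpha < 1 -> (1 <= d)%nat -> 0 < r -> r < Rb ->
  forall eps : R, 0 < eps ->
  exists M : R, forall t1 t2 : R,
    M <= t1 -> M <= t2 -> r <= t1 / t2 <= Rb ->
    Rabs (gammaL0 d t1 t2 alpha - (2 * ln (1 / alpha) + ln (t2 + 1))) < eps.
Proof.
  intros Ha Hd Hr HrR eps Heps.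
  assert (Hd1 : 1 <= INR d) by (apply (le_INR 1); exact Hd).
  set (c := 2 * ln (1 / alpha)).
  assert (Hc : 0 < c).
  { unfold c. assert (1 < 1 / alpha).
    { apply (Rmult_lt_reg_r alpha); [lra|]. unfold Rdiv. rewrite Rmult_assoc, Rinv_l by lra. lra. }
    assert (ln 1 < ln (1 / alpha)) by (apply ln_increasing; lra).
    rewrite ln_1 in H0. lra. }
  set (kappa := r / 2).
  assert (Hk : 0 < kappa) by (unfold kappa; lra).
  set (eta := Rmin (kappa / 2) (eps / (8 + 28 / kappa))).
  assert (H28 : 0 < 8 + 28 / kappa).
  { assert (0 < 28 / kappa) by (apply Rdiv_lt_0_compat; lra). lra. }
  assert (Heta : 0 < eta).
  { apply Rmin_pos; [lra| apply Rdiv_lt_0_compat; lra]. }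
  assert (Heta1 : eta <= kappa / 2) by apply Rmin_l.
  assert (Heta2 : eta * (8 + 28 / kappa) <= eps).
  { assert (eta <= eps / (8 + 28 / kappa)) by apply Rmin_r.
    apply (Rmult_le_compat_r (8 + 28 / kappa)) in H; [|lra].
    unfold Rdiv at 2 in H. rewrite Rmult_assoc, Rinv_l in H by lra. lra. }
  set (C := 36 + 2 * c * c + c).
  set (Q := C / eta).
  assert (HQ : eta * Q = C) by (unfold Q; field; lra).
  set (B := 2 * (r + INR d) / r).
  assert (HB : r * B = 2 * (r + INR d)) by (unfold B; field; lra).
  assert (HB0 : 0 < B) by (unfold B; apply Rdiv_lt_0_compat; lra).
  exists (4 + B + Q * Q).
  intros t1 t2 Ht1 Ht2 Hrat.
  assert (HQQ : 0 <= Q * Q) by nra.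
  assert (Ht2p : 0 < t2) by lra.
  assert (Ht1r : r * t2 <= t1).
  { destruct Hrat as [Hrat _].
    apply (Rmult_le_compat_r t2) in Hrat; [|lra].
    unfold Rdiv in Hrat. rewrite Rmult_assoc, Rinv_l in Hrat by lra. lra. }
  set (m := t2 + 1).
  set (N := t1 - INR d + 1).
  assert (Hm4 : 4 <= m) by (unfold m; lra).
  assert (HmB : r * B <= r * m) by (apply Rmult_le_compat_l; unfold m; lra).
  assert (HN : kappa * m <= N) by (unfold N, kappa, m in *; nra).
  assert (HN1 : 1 <= N) by (unfold kappa in HN; nra).
  set (p := sqrt m).
  assert (Hp0 : 0 <= p) by apply sqrt_pos.
  assert (Hpp : p * p = m) by (apply sqrt_sqrt; lra).
  set (q := sqrt p).
  assert (Hq0 : 0 <= q) by apply sqrt_pos.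
  assert (Hqq : q * q = p) by (apply sqrt_sqrt; lra).
  assert (Hp2 : 2 <= p) by nra.
  assert (Hq1 : 1 <= q) by nra.
  assert (HpQ : Q <= p).
  { destruct (Rle_or_lt Q p) as [h|h]; auto.
    assert (HQ0 : 0 < Q) by lra.
    assert (p * p < Q * Q) by nra. unfold m in Hpp. lra. }
  set (s := ln m).
  assert (Hs : s = 4 * ln q).
  { unfold s. rewrite <- Hpp, <- Hqq. rewrite !ln_mult by nra. ring. }
  assert (Hlnq : ln q <= q - 1).
  { pose proof (exp_ineq1_le (ln q)). rewrite exp_ln in H by lra. lra. }
  assert (Hs0 : 0 <= s).
  { unfold s. destruct (Rle_or_lt m 1) as [h|h]; [lra|].
    pose proof (ln_increasing 1 m ltac:(lra) h). rewrite ln_1 in H. lra. }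
  set (L := s + c).
  assert (HL0 : 0 < L) by (unfold L; lra).
  assert (HLq : L <= 4 * q + c) by (unfold L; lra).
  assert (HCp : C <= eta * p) by (rewrite <- HQ; apply Rmult_le_compat_l; lra).
  assert (HL1 : L <= eta * m).
  { assert (L <= C * p) by (unfold C in *; nra). rewrite <- Hpp. nra. }
  assert (HL2 : L * L <= eta * m).
  { assert (L * L <= C * p).
    { assert (L * L <= (4 * q + c) * (4 * q + c)) by (apply Rmult_le_compat; lra).
      assert (8 * q * c <= 16 * (q * q) + c * c) by (pose proof (Rle_0_sqr (4 * q - c)); unfold Rsqr in *; lra).
      assert (c * c <= c * c * p) by nra.
      assert (c <= c * p) by nra.
      unfold C. nra. }
    rewrite <- Hpp. nra. }
  set (x := L / N).
  assert (HxN : x * N = L) by (unfold x; field; lra).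
  assert (Hx0 : 0 < x) by (unfold x; apply Rdiv_lt_0_compat; lra).
  assert (Hx12 : x <= 1 / 2) by nra.
  set (u := exp (- x)).
  assert (Hu1 : 1 - x <= u) by (unfold u; pose proof (exp_ineq1_le (- x)); lra).
  assert (Hu2 : u <= 1 - x + x * x).
  { assert (Hux : u * exp x = 1).
    { unfold u. rewrite <- exp_plus. replace (- x + x) with 0 by ring. apply exp_0. }
    pose proof (exp_ineq1_le x).
    assert (0 < u) by (unfold u; apply exp_pos).
    assert (u * (1 + x) <= 1) by nra.
    nra. }
  assert (Hpow : Rpower (alpha ^ 2 / (t2 + 1)) (1 / (t1 - INR d + 1)) = u).
  { unfold Rpower, u. f_equal. fold m N.
    replace (ln (alpha ^ 2 / m)) with (ln (alpha ^ 2) + ln (/ m))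
      by (unfold Rdiv; rewrite ln_mult; [reflexivity| apply pow_lt; lra | apply Rinv_0_lt_compat; lra]).
    rewrite ln_Rinv, ln_pow by lra.
    fold s. unfold x, L, c. unfold Rdiv. rewrite !Rmult_1_l, (ln_Rinv alpha) by lra.
    simpl INR. field. lra. }
  unfold gammaL0. rewrite Hpow. fold m.
  replace (t1 - INR d) with (N - 1) by (unfold N; ring).
  replace t2 with (m - 1) at 1 by (unfold m; ring).
  replace (2 * ln (1 / alpha) + ln m) with L by (unfold L, s, c; ring).
  try replace (c + s) with L by (unfold L; ring).
  apply (core m N L x u eta kappa eps); auto.
Qed.
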